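(* $E^{\partial}_{FTP}$ is sound and complete for bisimilarity on $T(\Sigma^{\partial}_{FTP})$: for all closed $s,t\in T(\Sigma^{\partial}_{FTP})$, $E^{\partial}_{FTP}\vdash s=t$ if and only if $s\sim t$.
   Context: Fix a finite nonempty set $\mathcal A$ of actions, a finite set $\mathcal P$ of predicates, a subset $\mathcal P^I\subseteq\mathcal P$ of implicit predicates, and for each $P\in\mathcal P^I$ a set $\mathcal A_P\subseteq\mathcal A$. $\Sigma^\partial_{FTP}$ consists of $\delta$, constants $\kappa_P$ ($P\in\mathcal P$), prefixes $a.\_$ ($a\in\mathcal A$), binary $+$, and unary $\partial_{\mathcal B,\mathcal Q}$ for all $\mathcal B\subseteq\mathcal A$, $\mathcal Q\subseteq\mathcal P$. Semantics on closed terms: the least relations closed under: $a.x\xrightarrow{a}x$; $x\xrightarrow{a}x'\Rightarrow x+y\xrightarrow{a}x'$; $y\xrightarrow{a}y'\Rightarrow x+y\xrightarrow{a}y'$; $P\kappa_P$; $Px\Rightarrow P(x+y)$; $Py\Rightarrow P(x+y)$; $Px\Rightarrow P(a.x)$ for $P\in\mathcal P^I$, $a\in\mathcal A_P$; $x\xrightarrow{a}x'\Rightarrow\partial_{\mathcal B,\mathcal Q}(x)\xrightarrow{a}\partial_{\emptyset,\mathcal Q\cap\mathcal P^I}(x')$ if $a\notin\mathcal B$; $Px\Rightarrow P(\partial_{\mathcal B,\mathcal Q}(x))$ if $P\notin\mathcal Q$. Bisimulation: symmetric $R$ with $(s,t)\in R$, $s\xrightarrow{a}s'$ implying $t\xrightarrow{a}t'$,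 $(s',t')\in R$, and $Ps$ implying $Pt$; $\sim$ is the union of all bisimulations. $E^\partial_{FTP}$ consists of: $x+y=y+x$; $(x+y)+z=x+(y+z)$; $x+x=x$; $x+\delta=x$; $a.(x+\kappa_P)=a.(x+\kappa_P)+\kappa_P$ ($P\in\mathcal P^I$, $a\in\mathcal A_P$); $\partial_{\mathcal B,\mathcal Q}(\delta)=\delta$; $\partial_{\mathcal B,\mathcal Q}(\kappa_P)=\delta$ if $P\in\mathcal Q$; $\partial_{\mathcal B,\mathcal Q}(\kappa_P)=\kappa_P$ if $P\notin\mathcal Q$; $\partial_{\mathcal B,\mathcal Q}(a.x)=\sum_{P\notin\mathcal Q,\,P(a.x)}\kappa_P$ if $a\in\mathcal B$ (schema: for each closed instance of $x$ the sum ranges over predicates $P\notin\mathcal Q$ satisfied by $a.x$); $\partial_{\mathcal B,\mathcal Q}(a.x)=\partial_{\emptyset,\mathcal Q}(a.x)$ if $a\notin\mathcal B$; $\partial_{\emptyset,\mathcal Q}(a.x)=a.\partial_{\emptyset,\mathcal Q\cap\mathcal P^I}(x)$; $\partial_{\mathcal B,\mathcal Q}(x+y)=\partial_{\mathcal B,\mathcal Q}(x)+\partial_{\mathcal B,\mathcal Q}(y)$. $\vdash$ is derivability in equational logic. *)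

(* Defs.v *)
From mathcomp Require Import all_boot.
Set Implicit Arguments. Unset Strict Implicit. Unset Printing Implicit Defensive.

Section FTP.
Variables (A P : finType).

Inductive term : Type :=
| Var   of nat
| Delta
| Kappa of P
| Pref  of A & term
| Plus  of term & term
| Encap of {set A} & {set P} & term.

Fixpoint closed_term (t : term) : Prop :=
  match t with
  | Var _ => False
  | Delta | Kappa _ => True
  | Pref _ t => closed_term t
  | Plus t u => closed_term t /\ closed_term u
  | Encap _ _ t => closed_term t
  end.

Fixpoint subst (s : nat -> term) (t : term) : term :=
  match t with
  | Var n => s n
  | Delta => Delta
  | Kappa p => Kappa p
  | Pref a t => Pref a (subst s t)
  | Plus t u => Plus (subst s t) (subst s u)
  | Encap B Q t => Encap B Q (subst s t)
  end.

Variables (PI : {set P}) (AP : P -> {set A}).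

Inductive step : term -> A -> term -> Prop :=
| st_pref a x : step (Pref a x) a x
| st_plusl a x y x' : step x a x' -> step (Plus x y) a x'
| st_plusr a x y y' : step y a y' -> step (Plus x y) a y'
| st_encap (B : {set A}) (Q : {set P}) a x x' : a \notin B -> step x a x' ->
    step (Encap B Q x) a (Encap set0 (Q :&: PI) x').

(* Predicate satisfaction: holds p x means "P x" *)
Inductive holds : P -> term -> Prop :=
| h_kappa p : holds p (Kappa p)
| h_plusl p x y : holds p x -> holds p (Plus x y)
| h_plusr p x y : holds p y -> holds p (Plus x y)
| h_pref p a x : p \in PI -> a \in AP p -> holds p x -> holds p (Pref a x)
| h_encap p (B : {set A}) (Q : {set P}) x : p \notin Q -> holds p x -> holds p (Encap B Q x).

Definition bisimulation (R : term -> term -> Prop) : Prop :=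
  (forall s t, R s t -> R t s) /\
  (forall s t, R s t ->
     (forall a s', step s a s' -> exists2 t', step t a t' & R s' t') /\
     (forall p, holds p s -> holds p t)).

Definition bisimilar (s t : term) : Prop :=
  exists R, bisimulation R /\ R s t.

Definition sumK (l : seq P) : term := foldr (fun p u => Plus (Kappa p) u) Delta l.

Inductive ax : term -> term -> Prop :=
| ax_comm : ax (Plus (Var 0) (Var 1)) (Plus (Var 1) (Var 0))
| ax_assoc : ax (Plus (Plus (Var 0) (Var 1)) (Var 2))
                (Plus (Var 0) (Plus (Var 1) (Var 2)))
| ax_idem : ax (Plus (Var 0) (Var 0)) (Var 0)
| ax_delta : ax (Plus (Var 0) Delta) (Var 0)
| ax_impl p a : p \in PI -> a \in AP p ->
    ax (Pref a (Plus (Var 0) (Kappa p)))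
       (Plus (Pref a (Plus (Var 0) (Kappa p))) (Kappa p))
| ax_encap_delta (B : {set A}) (Q : {set P}) : ax (Encap B Q Delta) Delta
| ax_encap_kappa_in (B : {set A}) (Q : {set P}) p : p \in Q -> ax (Encap B Q (Kappa p)) Delta
| ax_encap_kappa_out (B : {set A}) (Q : {set P}) p : p \notin Q -> ax (Encap B Q (Kappa p)) (Kappa p)
| ax_encap_pref_block (B : {set A}) (Q : {set P}) a t (l : seq P) : a \in B -> closed_term t ->
    (forall p, p \in l <-> (p \notin Q /\ holds p (Pref a t))) ->
    ax (Encap B Q (Pref a t)) (sumK l)
| ax_encap_pref_free (B : {set A}) (Q : {set P}) a : a \notin B ->
    ax (Encap B Q (Pref a (Var 0))) (Encap set0 Q (Pref a (Var 0)))
| ax_encap_pref (Q : {set P}) a :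
    ax (Encap set0 Q (Pref a (Var 0))) (Pref a (Encap set0 (Q :&: PI) (Var 0)))
| ax_encap_plus (B : {set A}) (Q : {set P}) :
    ax (Encap B Q (Plus (Var 0) (Var 1))) (Plus (Encap B Q (Var 0)) (Encap B Q (Var 1))).

Inductive deriv : term -> term -> Prop :=
| d_ax l r (s : nat -> term) : ax l r -> deriv (subst s l) (subst s r)
| d_refl t : deriv t t
| d_sym t u : deriv t u -> deriv u t
| d_trans t u v : deriv t u -> deriv u v -> deriv t v
| d_pref a t u : deriv t u -> deriv (Pref a t) (Pref a u)
| d_plus t t' u u' : deriv t t' -> deriv u u' -> deriv (Plus t u) (Plus t' u')
| d_encap (B : {set A}) (Q : {set P}) t u : deriv t u -> deriv (Encap B Q t) (Encap B Q u).

End FTP.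

(* Main.v *)
Require Import Defs.
From mathcomp Require Import all_boot.
From Stdlib Require Import Classical.
From Stdlib Require List.
From mathcomp Require Import zify.
Set Implicit Arguments. Unset Strict Implicit. Unset Printing Implicit Defensive.

Section Sound.
Variables (A P : finType) (PI : {set P}) (AP : P -> {set A}).
Notation term := (term A P).
Notation Dl := (Delta A P).
Notation K := (Kappa A).
Notation step := (@Defs.step A P PI).
Notation holds := (@Defs.holds A P PI AP).
Notation bis := (@bisimilar A P PI AP).


Lemma stD a x : ~ step Dl a x. Proof. by move=> h; inversion h. Qed.
Lemma stK p a x : ~ step (K p) a x. Proof. by move=> h; inversion h. Qed.
Lemma stV n a x : ~ step (Var A P n) a x. Proof. by move=> h; inversion h. Qed.
Lemma stPr b x a y : step (Pref b x) a y <-> a = b /\ y = x.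
Proof. split=> [h|[-> ->]]; [by inversion h|exact: st_pref]. Qed.
Lemma stPl x y a z : step (Plus x y) a z <-> step x a z \/ step y a z.
Proof. split=> [h|[h|h]]; [inversion h; subst; auto|exact: st_plusl|exact: st_plusr]. Qed.
Lemma stE B Q x a z : step (Encap B Q x) a z <->
  exists2 x', a \notin B /\ step x a x' & z = Encap set0 (Q :&: PI) x'.
Proof.
split=> [h|[x' [h1 h2] ->]]; last exact: st_encap.
inversion h; subst; by exists x'.
Qed.
Lemma hD p : ~ holds p Dl. Proof. by move=> h; inversion h. Qed.
Lemma hV p n : ~ holds p (Var A P n). Proof. by move=> h; inversion h. Qed.
Lemma hK p q : holds p (K q) <-> p = q.
Proof. split=> [h|->]; [by inversion h|exact: h_kappa]. Qed.
Lemma hPr p a x : holds p (Pref a x) <-> [/\ p \in PI, a \in AP p & holds p x].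
Proof. split=> [h|[*]]; [by inversion h|exact: h_pref]. Qed.
Lemma hPl p x y : holds p (Plus x y) <-> holds p x \/ holds p y.
Proof. split=> [h|[h|h]]; [inversion h; subst; auto|exact: h_plusl|exact: h_plusr]. Qed.
Lemma hE p B Q x : holds p (Encap B Q x) <-> p \notin Q /\ holds p x.
Proof. split=> [h|[*]]; [by inversion h|exact: h_encap]. Qed.

Lemma bis_bisim : bisimulation PI AP bis.
Proof.
split.
- move=> s t [R [[Rs Rt] H]]; exists R; split; [split|]; auto.
- move=> s t [R [[Rs Rt] H]]; split.
  + move=> a s' st; have [H1 _] := Rt _ _ H.
    have [t' st' Rst] := H1 _ _ st; exists t' => //; exists R; split => //; split.
  + move=> p hp; have [_ H2] := Rt _ _ H; auto.
Qed.

Lemma bis_sym s t : bis s t -> bis t s.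
Proof. by case: bis_bisim => H _; apply: H. Qed.

Lemma bis_step s t a s' : bis s t -> step s a s' -> exists2 t', step t a t' & bis s' t'.
Proof. case: bis_bisim => _ H h; exact: (proj1 (H _ _ h)). Qed.

Lemma bis_holds s t p : bis s t -> holds p s -> holds p t.
Proof. case: bis_bisim => _ H h; exact: (proj2 (H _ _ h)). Qed.

Lemma bis_refl s : bis s s.
Proof.
exists (fun x y => x = y); split => //; split; first by move=> ? ? ->.
move=> x y ->; split => //; move=> a s' st; by exists s'.
Qed.

Lemma bis_trans s u t : bis s u -> bis u t -> bis s t.
Proof.
move=> h1 h2.
exists (fun x y => exists2 z, bis x z & bis z y); split; last by exists u.
split.
- move=> x y [z h h']; exists z; exact: bis_sym.
- move=> x y [z h h']; split.
  + move=> a x' st; have [z' st' hz] := bis_step h st.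
    have [y' st'' hy] := bis_step h' st'; exists y' => //; by exists z'.
  + move=> p hp; exact: (bis_holds h' (bis_holds h hp)).
Qed.

Inductive cong : term -> term -> Prop :=
| c_bis x y : bis x y -> cong x y
| c_pref a x y : cong x y -> cong (Pref a x) (Pref a y)
| c_plus x x' y y' : cong x x' -> cong y y' -> cong (Plus x y) (Plus x' y')
| c_encap B Q x y : cong x y -> cong (Encap B Q x) (Encap B Q y).

Lemma cong_sym x y : cong x y -> cong y x.
Proof.
elim=> *; [apply: c_bis; exact: bis_sym|exact: c_pref|exact: c_plus|exact: c_encap].
Qed.

Lemma cong_bisim : bisimulation PI AP cong.
Proof.
split; first exact: cong_sym.
move=> s t; elim.
- move=> x y h; split.
  + move=> a x' st; have [y' ? ?] := bis_step h st; exists y' => //; exact: c_bis.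
  + move=> p; exact: bis_holds.
- move=> a x y h [IH1 IH2]; split.
  + move=> b x' /stPr [-> ->]; exists y => //; exact: st_pref.
  + move=> p /hPr [? ? ?]; apply/hPr; split; auto.
- move=> x x' y y' hx [IHx1 IHx2] hy [IHy1 IHy2]; split.
  + move=> b z /stPl [st|st].
    * have [w ? ?] := IHx1 _ _ st; exists w => //; exact: st_plusl.
    * have [w ? ?] := IHy1 _ _ st; exists w => //; exact: st_plusr.
  + move=> p /hPl [?|?]; apply/hPl; auto.
- move=> B Q x y h [IH1 IH2]; split.
  + move=> b z /stE [x' [hb st] ->].
    have [w ? ?] := IH1 _ _ st; exists (Encap set0 (Q :&: PI) w).
    * exact: st_encap.
    * exact: c_encap.
  + move=> p /hE [? ?]; apply/hE; auto.
Qed.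

Lemma cong_bis x y : cong x y -> bis x y.
Proof. move=> h; exists cong; split => //; exact: cong_bisim. Qed.

Lemma bis_intro u v :
  (forall a u', step u a u' -> exists2 v', step v a v' & bis u' v') ->
  (forall a v', step v a v' -> exists2 u', step u a u' & bis v' u') ->
  (forall p, holds p u -> holds p v) ->
  (forall p, holds p v -> holds p u) -> bis u v.
Proof.
move=> h1 h2 h3 h4.
exists (fun x y => (x = u /\ y = v) \/ (x = v /\ y = u) \/ bis x y); split; last by left.
split.
- move=> x y [[-> ->]|[[-> ->]|h]]; [right;left|left|right;right] => //; exact: bis_sym.
- move=> x y [[-> ->]|[[-> ->]|h]]; split => //.
  + move=> a x' st; have [y' ? ?] := h1 _ _ st; exists y'; auto.
  + move=> a x' st; have [y' ? ?] := h2 _ _ st; exists y'; auto.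
  + move=> a x' st; have [y' ? ?] := bis_step h st; exists y'; auto.
  + move=> p; exact: bis_holds.
Qed.

Lemma bis_same u v :
  (forall a u', step u a u' -> step v a u') ->
  (forall a v', step v a v' -> step u a v') ->
  (forall p, holds p u -> holds p v) ->
  (forall p, holds p v -> holds p u) -> bis u v.
Proof.
move=> h1 h2 h3 h4; apply: bis_intro => //.
- move=> a u' st; exists u'; [exact: h1|exact: bis_refl].
- move=> a u' st; exists u'; [exact: h2|exact: bis_refl].
Qed.

Lemma subst_closed (s : nat -> term) (t : term) : closed_term t -> subst s t = t.
Proof. elim: t => //= [a t IH h|t IHt u IHu [h1 h2]|B Q t IH h]; by rewrite ?IH ?IHt ?IHu. Qed.

Lemma sumK_nostep (l : seq P) a x : ~ step (sumK A l) a x.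
Proof. elim: l => [|p l IH] /= st; inversion st; subst => //; inversion H3. Qed.

Lemma sumK_holds (l : seq P) p : holds p (sumK A l) <-> p \in l.
Proof.
elim: l => [|q l IH] /=; first by split => // /hD.
rewrite hPl hK in_cons IH; split.
- by case=> [->|->]; rewrite ?eqxx ?orbT.
- by case/orP=> [/eqP|]; auto.
Qed.

Lemma ax_sound (l0 r0 : term) (s : nat -> term) : ax PI AP l0 r0 -> bis (subst s l0) (subst s r0).
Proof.
case=> /=.
- apply: bis_same => [a u|a u|p|p]; rewrite ?stPl ?hPl; tauto.
- apply: bis_same => [a u|a u|p|p]; rewrite ?stPl ?hPl; tauto.
- apply: bis_same => [a u|a u|p|p]; rewrite ?stPl ?hPl; tauto.
- apply: bis_same => [a u|a u|p|p]; rewrite ?stPl ?hPl; [move: (@stD a u)|move: (@stD a u)|move: (@hD p)|move: (@hD p)]; tauto.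
- move=> p a hp ha; apply: bis_same => [b u|b u|q|q]; rewrite ?stPl ?hPl.
  + by left.
  + by case=> [//|/stK].
  + by left.
  + case=> [//|/hK ->]; apply/hPr; split => //; apply/hPl; right; exact/hK.
- move=> B Q; apply: bis_same => [b u|b u|q|q]; rewrite ?stE ?hE.
  + by case=> x' [_ /stD].
  + by move/stD.
  + by case.
  + by move/hD.
- move=> B Q p hp; apply: bis_same => [b u|b u|q|q]; rewrite ?stE ?hE.
  + by case=> x' [_ /stK].
  + by move/stD.
  + by case=> hq /hK e; move: hq; rewrite e hp.
  + by move/hD.
- move=> B Q p hp; apply: bis_same => [b u|b u|q|q]; rewrite ?stE ?hE.
  + by case=> x' [_ /stK].
  + by move/stK.
  + by case.
  + by move/hK ->; split => //; exact/hK.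
- move=> B Q a t l ha ht hl; rewrite subst_closed // (@subst_closed s (sumK A l)); last by elim: l {hl}.
  apply: bis_same => [b u|b u|q|q].
  + by case/stE => x' [/negP hb /stPr [eb _]]; rewrite eb in hb.
  + move=> st; by have := sumK_nostep st.
  + move/hE=> h; exact/sumK_holds/hl.
  + move/sumK_holds/hl=> [h1 h2]; exact/hE.
- move=> B Q a ha; apply: bis_same => [b u|b u|q|q]; rewrite ?stE ?hE.
  + case=> x' [_ st] ->; exists x' => //; split => //; by rewrite in_set0.
  + case=> x' [_ st] ->; exists x' => //; split => //; by case/stPr: st => ->.
  + by [].
  + by [].
- move=> Q a; apply: bis_same => [b u|b u|q|q]; rewrite ?stE ?hE ?stPr ?hPr.
  + by case=> x' [_ /stPr [-> ->]] ->.
  + case=> -> ->; exists (s 0) => //; split; [by rewrite in_set0|exact/stPr].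
  + case=> hq [h1 h2 h3]; split => //; apply/hE; split => //.
    by rewrite in_setI h1 andbT.
  + case=> h1 h2 /hE [h3 h4]; split => //.
    by move: h3; rewrite in_setI h1 andbT.
- move=> B Q; apply: bis_same => [b u|b u|q|q]; rewrite ?stE ?hE ?stPl ?hPl.
  + case=> x' [hb /stPl [st|st]] ->; [left|right]; apply/stE; by exists x'.
  + case=> /stE [x' [hb st] ->]; exists x' => //; split => //; apply/stPl; auto.
  + case=> hq [h|h]; [left|right]; exact/hE.
  + case=> /hE [hq h]; split => //; auto.
Qed.

Lemma soundness s t : deriv PI AP s t -> bis s t.
Proof.
elim=> {s t}.
- move=> l r s h; exact: ax_sound.
- exact: bis_refl.
- move=> t u _; exact: bis_sym.
- move=> t u v _ h1 _ h2; exact: bis_trans h1 h2.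
- move=> a t u _ h; apply: cong_bis; apply: c_pref; exact: c_bis.
- move=> t t' u u' _ h1 _ h2; apply: cong_bis; apply: c_plus; exact: c_bis.
- move=> B Q t u _ h; apply: cong_bis; apply: c_encap; exact: c_bis.
Qed.

Notation D := (@deriv A P PI AP).

Definition sb (x y z : term) : nat -> term :=
  fun n => match n with 0 => x | 1 => y | _ => z end.

Lemma dC x y : D (Plus x y) (Plus y x).
Proof. exact (d_ax (sb x y x) (@ax_comm A P PI AP)). Qed.
Lemma dA x y z : D (Plus (Plus x y) z) (Plus x (Plus y z)).
Proof. exact (d_ax (sb x y z) (@ax_assoc A P PI AP)). Qed.
Lemma dI x : D (Plus x x) x.
Proof. exact (d_ax (sb x x x) (@ax_idem A P PI AP)). Qed.
Lemma dD x : D (Plus x Dl) x.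
Proof. exact (d_ax (sb x x x) (@ax_delta A P PI AP)). Qed.

Lemma addL x y u : D x (Plus x u) -> D (Plus x y) (Plus (Plus x y) u).
Proof.
move=> h.
apply: d_trans (d_plus h (d_refl _ _ y)) _.
apply: d_trans (dA _ _ _) _.
apply: d_trans (d_plus (d_refl _ _ x) (dC _ _)) _.
exact: d_sym (dA _ _ _).
Qed.

Lemma addR x y u : D y (Plus y u) -> D (Plus x y) (Plus (Plus x y) u).
Proof.
move=> h.
apply: d_trans (d_plus (d_refl _ _ x) h) _.
exact: d_sym (dA _ _ _).
Qed.

Lemma step_deriv t a t' : step t a t' -> D t (Plus t (Pref a t')).
Proof.
elim=> {t a t'}.
- move=> a x; exact: d_sym (dI _).
- move=> a x y x' _ h; exact: addL.
- move=> a x y y' _ h; exact: addR.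
- move=> B Q a x x' nb _ h.
  apply: d_trans (d_encap B Q h) _.
  apply: d_trans (d_ax (sb x (Pref a x') x) (@ax_encap_plus A P PI AP B Q)) _ => /=.
  apply: d_plus (d_refl _ _ _) _.
  apply: d_trans (d_ax (sb x' x' x') (@ax_encap_pref_free A P PI AP B Q a nb)) _ => /=.
  exact: (d_ax (sb x' x' x') (@ax_encap_pref A P PI AP Q a)).
Qed.

Lemma holds_deriv p t : holds p t -> D t (Plus t (K p)).
Proof.
elim=> {p t}.
- move=> p; exact: d_sym (dI _).
- move=> p x y _ h; exact: addL.
- move=> p x y _ h; exact: addR.
- move=> p a x hp ha _ h.
  apply: d_trans (d_pref a h) _.
  apply: d_trans (d_ax (sb x x x) (ax_impl hp ha)) _ => /=.
  exact: d_plus (d_pref a (d_sym h)) (d_refl _ _ _).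
- move=> p B Q x hp _ h.
  apply: d_trans (d_encap B Q h) _.
  apply: d_trans (d_ax (sb x (K p) x) (@ax_encap_plus A P PI AP B Q)) _ => /=.
  apply: d_plus (d_refl _ _ _) _.
  exact: (d_ax (sb x x x) (@ax_encap_kappa_out A P PI AP B Q p hp)).
Qed.

Definition sumL (L : seq term) : term := foldr (@Plus A P) Dl L.

Lemma sumL_cat L1 L2 : D (sumL (L1 ++ L2)) (Plus (sumL L1) (sumL L2)).
Proof.
elim: L1 => [|u L1 IH] /=.
- exact: d_sym (d_trans (dC _ _) (dD _)).
- apply: d_trans (d_plus (d_refl _ _ u) IH) _.
  exact: d_sym (dA _ _ _).
Qed.

Lemma sumK_sumL (l : seq P) : sumK A l = sumL (map (@Kappa A P) l).
Proof. by elim: l => //= p l ->. Qed.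

Definition good (x u : term) :=
  (exists a x', u = Pref a x' /\ step x a x') \/ (exists p, u = K p).

Lemma step_closed x a x' : step x a x' -> closed_term x -> closed_term x'.
Proof. elim=> //= *; intuition. Qed.

Lemma ex_list (phi : P -> Prop) : exists l : seq P, forall p, p \in l <-> phi p.
Proof.
suff [l hl] : exists l : seq P, forall p, p \in l <-> (p \in enum P /\ phi p).
  exists l => p; split => [/hl [_ h]//|h]; apply/hl; split => //; by rewrite mem_enum.
elim: (enum P) => [|x s [l hl]].
- by exists [::] => p; split => //; case.
- case: (classic (phi x)) => hx.
  + exists (x :: l) => p; split.
    * rewrite in_cons => /orP [/eqP ->|/hl [h1 h2]]; first by rewrite in_cons eqxx.
      by rewrite in_cons h1 orbT.
    * rewrite in_cons => -[/orP [/eqP ->|h1] h2]; first by rewrite in_cons eqxx.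
      by rewrite in_cons; apply/orP; right; apply/hl.
  + exists l => p; split.
    * by move/hl=> [h1 h2]; rewrite in_cons h1 orbT.
    * rewrite in_cons => -[/orP [/eqP e|h1] h2]; first by subst.
      by apply/hl.
Qed.

Lemma encap_good B Q x u : closed_term x -> good x u ->
  exists L, D (Encap B Q u) (sumL L) /\
    (forall v, List.In v L -> good (Encap B Q x) v).
Proof.
move=> cx [[a [x' [-> st]]]|[p ->]].
- have cx' := step_closed st cx.
  case: (boolP (a \in B)) => ha.
  + have [l hl] := ex_list (fun p => p \notin Q /\ holds p (Pref a x')).
    exists (map (@Kappa A P) l); split.
    * rewrite -sumK_sumL.
      have := d_ax (sb x x x) (ax_encap_pref_block ha cx' hl).
      by rewrite /= subst_closed // (@subst_closed _ (sumK A l)); last by elim: l {hl}.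
    * move=> v /List.in_map_iff [p [<- _]]; right; by exists p.
  + exists [:: Pref a (Encap set0 (Q :&: PI) x')]; split.
    * apply: d_trans (d_ax (sb x' x' x') (@ax_encap_pref_free A P PI AP B Q a ha)) _ => /=.
      apply: d_trans (d_ax (sb x' x' x') (@ax_encap_pref A P PI AP Q a)) _ => /=.
      exact: d_sym (dD _).
    * move=> v [<-|//]; left; exists a, (Encap set0 (Q :&: PI) x'); split => //.
      exact: st_encap.
- case: (boolP (p \in Q)) => hp.
  + exists [::]; split => //; exact: (d_ax (sb x x x) (@ax_encap_kappa_in A P PI AP B Q p hp)).
  + exists [:: K p]; split.
    * apply: d_trans (d_ax (sb x x x) (@ax_encap_kappa_out A P PI AP B Q p hp)) _ => /=.
      exact: d_sym (dD _).
    * move=> v [<-|//]; right; by exists p.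
Qed.

Lemma encap_list B Q x L : closed_term x -> (forall u, List.In u L -> good x u) ->
  exists L', D (Encap B Q (sumL L)) (sumL L') /\
    (forall v, List.In v L' -> good (Encap B Q x) v).
Proof.
move=> cx; elim: L => [|u L IH] hL /=.
- exists [::]; split => //; exact: (d_ax (sb x x x) (@ax_encap_delta A P PI AP B Q)).
- have [L1 [h1 g1]] := encap_good B Q cx (hL u (or_introl erefl)).
  have [L2 [h2 g2]] := IH (fun v hv => hL v (or_intror hv)).
  exists (L1 ++ L2); split.
  + apply: d_trans (d_ax (sb u (sumL L) x) (@ax_encap_plus A P PI AP B Q)) _ => /=.
    apply: d_trans (d_plus h1 h2) _; exact: d_sym (sumL_cat _ _).
  + move=> v hv; case: (List.in_app_or _ _ _ hv); auto.
Qed.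

Lemma hnf x : closed_term x ->
  exists L, D x (sumL L) /\ (forall u, List.In u L -> good x u).
Proof.
elim: x => //=.
- move=> _; exists [::]; split => //; exact: d_refl.
- move=> p _; exists [:: K p]; split; first exact: d_sym (dD _).
  move=> v [<-|//]; right; by exists p.
- move=> a x _ _; exists [:: Pref a x]; split; first exact: d_sym (dD _).
  move=> v [<-|//]; left; exists a, x; split => //; exact: st_pref.
- move=> x IHx y IHy [cx cy].
  have [L1 [h1 g1]] := IHx cx; have [L2 [h2 g2]] := IHy cy.
  exists (L1 ++ L2); split.
  + apply: d_trans (d_plus h1 h2) _; exact: d_sym (sumL_cat _ _).
  + move=> v hv0; case: (List.in_app_or _ _ _ hv0) => /[dup] hv.
    * move/g1 => [[a [x' [-> st]]]|[p ->]]; [left; exists a, x'; split => //; exact: st_plusl|right; by exists p].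
    * move/g2 => [[a [x' [-> st]]]|[p ->]]; [left; exists a, x'; split => //; exact: st_plusr|right; by exists p].
- move=> B Q x IH cx.
  have [L [h g]] := IH cx.
  have [L' [h' g']] := encap_list B Q cx g.
  exists L'; split => //; exact: d_trans (d_encap B Q h) h'.
Qed.

Fixpoint sz (t : term) : nat :=
  match t with
  | Pref _ x => (sz x).+1
  | Plus x y => (sz x + sz y).+1
  | Encap _ _ x => (sz x).+1
  | _ => 1
  end.

Lemma step_sz x a x' : step x a x' -> sz x' < sz x.
Proof.
elim=> //= *; lia.
Qed.

Lemma in_holds u L p : List.In u L -> holds p u -> holds p (sumL L).
Proof.
elim: L => //= v L IH [<-|hu] h; apply/hPl; auto.
Qed.

Lemma fold_sum t L : (forall u, List.In u L -> D t (Plus t u)) -> D t (Plus t (sumL L)).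
Proof.
elim: L => [|u L IH] /= h; first exact: d_sym (dD _).
apply: d_trans (IH (fun v hv => h v (or_intror hv))) _.
apply: d_trans (d_plus (h u (or_introl erefl)) (d_refl _ _ _)) _.
exact: dA.
Qed.

Lemma main n s t : sz s + sz t < n -> closed_term s -> closed_term t -> bis s t ->
  D t (Plus t s).
Proof.
elim: n s t => // n IH s t hn cs ct hb.
have [L [hL gL]] := hnf cs.
apply: d_trans (fold_sum (L := L) _) (d_plus (d_refl _ _ _) (d_sym hL)).
move=> u hu; case: (gL _ hu) => [[a [x' [eu st]]]|[p eu]]; subst u.
- have [t' st' hb'] := bis_step hb st.
  have h1 := step_sz st; have h2 := step_sz st'.
  have hn' : sz x' + sz t' < n.
    by lia.
  have cx' := step_closed st cs; have ct' := step_closed st' ct.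
  have e1 := IH _ _ hn' cx' ct' hb'.
  have e2 := IH t' x' ltac:(lia) ct' cx' (bis_sym hb').
  have e : D t' x'.
    apply: d_trans e1 _; apply: d_trans (dC _ _) _; exact: d_sym e2.
  apply: d_trans (step_deriv st') _.
  exact: d_plus (d_refl _ _ _) (d_pref a e).
- apply: holds_deriv; apply: (bis_holds hb).
  apply: (bis_holds (bis_sym (soundness hL))).
  apply: in_holds hu _; exact: h_kappa.
Qed.

End Sound.

Theorem corollary1 (A P : finType) (hA : 0 < #|A|) (PI : {set P})
    (AP : P -> {set A}) (s t : term A P) :
  closed_term s -> closed_term t -> (deriv PI AP s t <-> bisimilar PI AP s t).
Proof.
move=> cs ct; split; first exact: soundness.
move=> hb.
have e1 := main (n := (sz s + sz t).+1) (ltnSn _) cs ct hb.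
have e2 := main (n := (sz t + sz s).+1) (ltnSn _) ct cs (bis_sym hb).
exact: d_trans e2 (d_trans (@dC A P PI AP s t) (d_sym e1)).
Qed.
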